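(* Let $k\in\mathbb C\setminus\mathbb Q$, $n,m\in\mathbb Z_{>0}$, $p_0=n+k^{-1}m$. For bipartitions $\alpha,\tilde\alpha\in\mathcal P_{n,m}$, $\alpha$ is $\mathcal E$-equivalent to $\tilde\alpha$ if and only if $\omega(\alpha)$ is $\mathcal R$-equivalent to $\omega(\tilde\alpha)$. In other words, the involution $\omega$ of $\mathcal P_{n,m}$ transforms the equivalence relation $\mathcal E$ into $\mathcal R$.
   Context: Partitions are identified with Young diagrams, i.e. finite sets of boxes $(i,j)\in\mathbb Z_{>0}^2$ ($i$ = row, $j$ = column) closed under moving up or left; a bipartition is a pair $\alpha=(\lambda,\mu)$ of partitions, with inclusion and set operations componentwise. For a box $x=(i,j)$, $c(x,a)=(j-1)+k(i-1)+a$, and $b_r(\alpha,k,p_0)=\sum_{x\in\lambda}c(x,0)^{r-1}+(-1)^r\sum_{y\in\mu}c(y,1+k-kp_0)^{r-1}$ for $r\ge1$. Bipartitions $\alpha,\tilde\alpha$ are $\mathcal E$-equivalent if $b_r(\alpha,k,p_0)=b_r(\tilde\alpha,k,p_0)$ for all $r\ge1$. Let $\pi(n,m)=\{(i,j):1\le i\le n,1\le j\le m\}$, $\theta(i,j)=(n-i+1,m-j+1)$ on $\pi(n,m)$, and let $\mathcal P_{n,m}$ be the set of bipartitions $(\lambda,\mu)$ with $\lambda,\mu\subset\pi(n,m)$. The involution $\omega:\mathcal P_{n,m}\to\mathcal P_{n,m}$ is $\omega(\lambda,\mu)=(\lambda,\pi(n,m)\setminus\theta(\mu))$. Bipartitions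 $(\lambda,\mu)$ and $(\tilde\lambda,\tilde\mu)$ are $\mathcal R$-equivalent if $\lambda\cap\mu=\tilde\lambda\cap\tilde\mu$ and $\lambda\cup\mu=\tilde\lambda\cup\tilde\mu$. *)

(* Defs.v *)
From HB Require Import structures.
From mathcomp Require Import all_boot all_order all_algebra.
From mathcomp Require Import complex.
From mathcomp Require Import Rstruct.
Set Implicit Arguments. Unset Strict Implicit. Unset Printing Implicit Defensive.
Import Order.TTheory GRing.Theory Num.Theory.
Local Open Scope ring_scope.

Definition CC : Type := (Rdefinitions.R)[i].

(* Boxes of pi(n,m) are encoded 0-indexed: the ordinal pair (a,b) : 'I_n * 'I_m
   stands for the box (i,j) = (a+1, b+1). *)
Definition box n m := ('I_n * 'I_m)%type.

Definition is_young n m (A : {set box n m}) : Prop :=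
  forall x : box n m, x \in A ->
    (forall i : 'I_n, (i <= x.1)%N -> ((i, x.2) : box n m) \in A) /\
    (forall j : 'I_m, (j <= x.2)%N -> ((x.1, j) : box n m) \in A).

Definition bipart n m := ({set box n m} * {set box n m})%type.
Definition in_P n m (al : bipart n m) : Prop := is_young al.1 /\ is_young al.2.

(* c(x,a) = (j-1) + k(i-1) + a for the box x = (i,j). *)
Definition cbox n m (k : CC) (x : box n m) (a : CC) : CC :=
  (nat_of_ord x.2)%:R + k * (nat_of_ord x.1)%:R + a.

Definition bpow n m (al : bipart n m) (k p0 : CC) (r : nat) : CC :=
  \sum_(x in al.1) cbox k x 0 ^+ r.-1
  + (-1) ^+ r * \sum_(y in al.2) cbox k y (1 + k - k * p0) ^+ r.-1.

Definition E_equiv n m (k p0 : CC) (al al' : bipart n m) : Prop :=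
  forall r : nat, (1 <= r)%N -> bpow al k p0 r = bpow al' k p0 r.

Definition theta n m (x : box n m) : box n m := (rev_ord x.1, rev_ord x.2).

Definition omega n m (al : bipart n m) : bipart n m :=
  (al.1, ~: [set theta y | y in al.2]).

Definition R_equiv n m (al al' : bipart n m) : Prop :=
  al.1 :&: al.2 = al'.1 :&: al'.2 /\ al.1 :|: al.2 = al'.1 :|: al'.2.

(* Main.v *)
Require Import Defs.
From HB Require Import structures.
From mathcomp Require Import all_boot all_order all_algebra.
From mathcomp Require Import complex.
From mathcomp Require Import Rstruct.
From mathcomp Require Import ring.
Import Order.TTheory GRing.Theory Num.Theory.
Local Open Scope ring_scope.
Set Implicit Arguments. Unset Strict Implicit. Unset Printing Implicit Defensive.

Lemma vand (T : finType) (c f : T -> CC) : injective c ->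
  (forall e, \sum_x f x * c x ^+ e = 0) -> forall x, f x = 0.
Proof.
move=> ci H x0.
have Hp : forall p : {poly CC}, \sum_x f x * p.[c x] = 0.
  move=> p.
  under eq_bigr => x _ do rewrite horner_coef big_distrr.
  rewrite exchange_big /= big1 // => i _.
  under eq_bigr => x _ do rewrite mulrCA.
  by rewrite -big_distrr /= H mulr0.
set P := \prod_(y | y != x0) ('X - (c y)%:P).
have HP : P.[c x0] != 0.
  rewrite /P horner_prod prodf_seq_neq0; apply/allP => y _; apply/implyP => hy; rewrite hornerXsubC subr_eq0.
  by apply/eqP => /ci /eqP; rewrite eq_sym (negbTE hy).
have := Hp P; rewrite (bigD1 x0) //= big1 ?addr0.
- by move/eqP; rewrite mulf_eq0 (negbTE HP) orbF => /eqP.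
move=> y hy; rewrite /P horner_prod (bigD1 y) //= hornerXsubC subrr.
by rewrite mul0r mulr0.
Qed.

Definition ind (b : bool) : CC := (b : nat)%:R.
Definition gf n m (al : bipart n m) (x : box n m) : CC :=
  ind (x \in al.1) - ind (theta x \in al.2).

Lemma thetaK n m : cancel (@theta n m) (@theta n m).
Proof. by case=> a b; rewrite /theta /= !rev_ordK. Qed.

Lemma cboxN (k : CC) n m (y : box n m) : k != 0 ->
  cbox k y (1 + k - k * (n%:R + k^-1 * m%:R)) = - cbox k (theta y) 0.
Proof.
move=> k0; rewrite /cbox /theta /=.
rewrite !natrB ?ltn_ord // mulrDr mulrA mulfV // mul1r -!natr1.
ring.
Qed.

Lemma ifind (b : bool) (F : CC) : (if b then F else 0) = ind b * F.
Proof. by case: b; rewrite /ind /= ?mul1r ?mul0r. Qed.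

Lemma bpowE (k : CC) n m (al : bipart n m) r : k != 0 ->
  bpow al k (n%:R + k^-1 * m%:R) r.+1 = \sum_x gf al x * cbox k x 0 ^+ r.
Proof.
move=> k0; rewrite /bpow /= big_mkcond [X in _ * X]big_mkcond /=.
under [X in _ * X]eq_bigr => y _ do rewrite cboxN //.
rewrite [X in _ * X](reindex_inj (can_inj (@thetaK n m))) /= big_distrr /= -big_split /=.
apply: eq_bigr => x _; rewrite thetaK !ifind [(- _) ^+ r]exprNn.
set s := (-1 : CC) ^+ r.
have hs : s * s = 1 by rewrite /s -exprMn mulrNN mulr1 expr1n.
rewrite exprS mulN1r -/s; clearbody s.
have -> : - s * (ind (theta x \in al.2) * (s * cbox k x 0 ^+ r))
   = - (ind (theta x \in al.2) * cbox k x 0 ^+ r).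
  by rewrite mulNr mulrCA [s * (s * _)]mulrA hs mul1r.
rewrite /gf; ring.
Qed.

Lemma cinj (k : CC) n m : (forall q : rat, k <> ratr q) ->
  injective (fun x : box n m => cbox k x 0).
Proof.
move=> hk [a b] [a' b']; rewrite /cbox /= !addr0 => E.
have [ea|na] := eqVneq (a : nat) a'.
  move: E; rewrite ea => /addIr /eqP; rewrite eqr_nat => /eqP eb.
  by congr pair; apply: val_inj.
exfalso; apply: (hk ((b%:Q - b'%:Q) / (a'%:Q - a%:Q))).
have d : (a'%:R - a%:R : CC) != 0.
  by rewrite subr_eq0 eqr_nat eq_sym.
rewrite fmorph_div /= rmorphB /= rmorphB /= !ratr_nat.
apply: (mulIf d); rewrite divfK //.
apply/eqP; rewrite eq_sym -subr_eq0.
have -> : (b%:R - b'%:R) - k * (a'%:R - a%:R) = (b%:R + k * a%:R) - (b'%:R + k * a'%:R) :> CC by ring.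
by rewrite E subrr.
Qed.

Definition G n m (al : bipart n m) (x : box n m) : nat :=
  ((x \in (omega al).1) + (x \in (omega al).2))%N.

Lemma gfG n m (al : bipart n m) x : gf al x = (G al x)%:R - 1.
Proof.
rewrite /gf /G /omega /= inE (can_imset_pre _ (@thetaK n m)) inE.
case: (x \in al.1); case: (theta x \in al.2); by rewrite /ind /= natrD; ring.
Qed.

Lemma boolL (a b c d : bool) : (a + b = c + d)%N <-> (a && b = c && d) /\ (a || b = c || d).
Proof. by case: a; case: b; case: c; case: d; split => //; case. Qed.

Theorem mainTheorem2 (k : CC) (n m : nat) :
  (forall q : rat, k <> ratr q) -> (0 < n)%N -> (0 < m)%N ->
  forall al al' : bipart n m, in_P al -> in_P al' ->
  (E_equiv k (n%:R + k^-1 * m%:R) al al' <-> R_equiv (omega al) (omega al')).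
Proof.
move=> hk _ _ al al' _ _.
have k0 : k != 0 by apply/eqP => e; apply: (hk 0); rewrite e rmorph0.
have GR : (forall x, G al x = G al' x) <-> R_equiv (omega al) (omega al').
  split.
    move=> H; split; apply/setP => x; [rewrite !in_setI | rewrite !in_setU];
      have /boolL [] := H x; done.
  case=> HI HU x; apply/boolL; split;
    [move/setP/(_ x): HI | move/setP/(_ x): HU]; by rewrite ?in_setI ?in_setU.
rewrite -GR; split.
- move=> E x.
  have : gf al x - gf al' x = 0.
    apply: (vand (f := fun x => gf al x - gf al' x) (cinj hk)) => e.
    under eq_bigr => y _ do rewrite mulrBl.
    by rewrite sumrB -!bpowE // E // subrr.
  rewrite !gfG => /eqP; rewrite subr_eq0 => /eqP /addIr /eqP.
  by rewrite eqr_nat => /eqP.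
- move=> H [|r] // _; rewrite !bpowE //.
  by apply: eq_bigr => x _; rewrite !gfG H.
Qed.
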